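(* Let $\mathcal{A}$ be a finite list in a finitely generated abelian group $\Gamma$, and let $G_1,G_2$ be torsion-wise finite abelian groups. Then $$T^{G_1\times G_2}_{\mathcal{A}}(x,y)=\sum_{\mathcal{B}\subset\mathcal{A}}T^{G_1}_{\mathcal{B}}(0,y)\cdot T^{G_2}_{\mathcal{A}/\mathcal{B}}(x,0),$$ where $\mathcal{B}$ is regarded as a list in $\Gamma$ and $\mathcal{A}/\mathcal{B}$ as a list in $\Gamma/\langle\mathcal{B}\rangle$.
   Context: $G$ is torsion-wise finite if $G[d]=\{x\in G\mid dx=0\}$ is finite for all $d>0$. Sublists are distinguished by index. For a list $\mathcal{L}$ in a finitely generated abelian group $\Lambda$ and a sublist $\mathcal{S}$: $r_{\mathcal{S}}$ is the rank of $\langle\mathcal{S}\rangle$, $m(\mathcal{S};G)=\#\mathrm{Hom}((\Lambda/\langle\mathcal{S}\rangle)_{\mathrm{tor}},G)$, and $T^G_{\mathcal{L}}(x,y)=\sum_{\mathcal{S}\subset\mathcal{L}}m(\mathcal{S};G)(x-1)^{r_{\mathcal{L}}-r_{\mathcal{S}}}(y-1)^{\#\mathcal{S}-r_{\mathcal{S}}}$. The contraction $\mathcal{A}/\mathcal{B}$ is the list of cosets $\{\overline\alpha\mid\alpha\in\mathcal{A}\smallsetminus\mathcal{B}\}$ in $\Gamma/\langle\mathcal{B}\rangle$. *)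

(* Defs.v *)
From HB Require Import structures.
From mathcomp Require Import all_boot all_order all_algebra.
From Stdlib Require Import ClassicalEpsilon.
Set Implicit Arguments. Unset Strict Implicit. Unset Printing Implicit Defensive.
Import Order.TTheory GRing.Theory Num.Theory.
Local Open Scope ring_scope.

Definition inspan (V : zmodType) (S : seq V) (v : V) : Prop :=
  exists c : 'I_(size S) -> int, v = \sum_(i < size S) S`_i *~ c i.

Definition fin_gen (V : zmodType) : Prop :=
  exists gens : seq V, forall v : V, inspan gens v.

Definition torsionwise_finite (G : zmodType) : Prop :=
  forall d : nat, (0 < d)%N -> exists s : seq G, forall x : G, x *+ d = 0 -> x \in s.

(* Quotients are handled through lifts: a list "in Gamma/<N>" is a list of
   representatives in Gamma; Lambda = Gamma/<N>. *)

Definition indep_mod (V : zmodType) (N : seq V) (xs : seq V) : Prop :=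
  forall c : 'I_(size xs) -> int,
    inspan N (\sum_(i < size xs) xs`_i *~ c i) -> forall i, c i = 0.

(* r is the rank of the subgroup <S-bar> of Gamma/<N>, i.e. the maximal number
   of Z-independent elements of <S-bar>; the preimage of <S-bar> in Gamma is
   <N ++ S>. *)
Definition is_rank_mod (V : zmodType) (N S : seq V) (r : nat) : Prop :=
  (exists xs : seq V, size xs = r /\ (forall x, x \in xs -> inspan (N ++ S) x)
                      /\ indep_mod N xs) /\
  (forall xs : seq V, (forall x, x \in xs -> inspan (N ++ S) x) ->
                      indep_mod N xs -> (size xs <= r)%N).

Definition rank_mod (V : zmodType) (N S : seq V) : nat :=
  epsilon (inhabits 0%N) (is_rank_mod N S).

(* The subgroup K = <N ++ S> of Gamma is the preimage of <S-bar> in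
   Lambda = Gamma/<N>, and Lambda/<S-bar> = Gamma/K.  Its torsion subgroup is
   Ksat/K where Ksat = {x | exists k > 0, k x in K}. *)
Definition in_sat (V : zmodType) (K : seq V) (x : V) : Prop :=
  exists k : nat, (0 < k)%N /\ inspan K (x *+ k).

(* phi (a function on lifts) defines a homomorphism Ksat/K -> G. *)
Definition is_tor_hom (V G : zmodType) (K : seq V) (phi : V -> G) : Prop :=
  (forall x y, in_sat K x -> in_sat K y -> phi (x + y) = phi x + phi y) /\
  (forall x, inspan K x -> phi x = 0).

(* #Hom((Gamma/K)_tor, G) = n : two such functions define the same
   homomorphism iff they agree on Ksat. *)
Definition is_hom_count (V G : zmodType) (K : seq V) (n : nat) : Prop :=
  exists hs : seq (V -> G),
    size hs = n /\
    (forall i, (i < n)%N -> is_tor_hom K (nth (fun _ => 0) hs i)) /\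
    (forall i j, (i < n)%N -> (j < n)%N ->
       (forall x, in_sat K x -> nth (fun _ => 0) hs i x = nth (fun _ => 0) hs j x) ->
       i = j) /\
    (forall phi, is_tor_hom K phi ->
       exists2 i, (i < n)%N &
         forall x, in_sat K x -> phi x = nth (fun _ => 0) hs i x).

Definition mult_mod (V : zmodType) (G : zmodType) (N S : seq V) : nat :=
  epsilon (inhabits 0%N) (is_hom_count G (N ++ S)).

Definition subl (V : Type) (L : seq V) (x0 : V) (I : {set 'I_(size L)}) : seq V :=
  [seq nth x0 L (val i) | i <- enum I].
Arguments subl {V} L x0 I.

Definition arith_tutte (R : comNzRingType) (V G : zmodType) (N L : seq V) (x y : R) : R :=
  \sum_(I : {set 'I_(size L)})
     (mult_mod G N (subl L 0 I))%:R
     * (x - 1) ^+ (rank_mod N L - rank_mod N (subl L 0 I))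
     * (y - 1) ^+ (#|I| - rank_mod N (subl L 0 I)).
Arguments arith_tutte R {V} G N L x y.

(* Main.v *)
Require Import Defs.
From HB Require Import structures.
From mathcomp Require Import all_boot all_order all_algebra.
From Stdlib Require Import ClassicalEpsilon Classical FunctionalExtensionality PropExtensionality.
From mathcomp Require Import zify ring.
From Stdlib Require Import Lia.
Set Implicit Arguments. Unset Strict Implicit. Unset Printing Implicit Defensive.
Import Order.TTheory GRing.Theory Num.Theory.
Local Open Scope ring_scope.
Lemma inspan0 (V : zmodType) (S : seq V) : inspan S 0.
Proof. exists (fun _ => 0); by rewrite big1 // => i _; rewrite mulr0z. Qed.

Lemma inspanD (V : zmodType) (S : seq V) u v : inspan S u -> inspan S v -> inspan S (u + v).
Proof.
move=> [c ->] [d ->]; exists (fun i => c i + d i).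
by rewrite -big_split /=; apply: eq_bigr => i _; rewrite mulrzDr.
Qed.

Lemma inspanZ (V : zmodType) (S : seq V) u z : inspan S u -> inspan S (u *~ z).
Proof.
move=> [c ->]; exists (fun i => c i * z).
by rewrite mulrz_suml; apply: eq_bigr => i _; rewrite mulrzA.
Qed.

Lemma inspanN (V : zmodType) (S : seq V) u : inspan S u -> inspan S (- u).
Proof. by move=> /(inspanZ (-1)); rewrite mulrN1z. Qed.

Lemma inspanB (V : zmodType) (S : seq V) u v : inspan S u -> inspan S v -> inspan S (u - v).
Proof. by move=> hu hv; apply: inspanD => //; apply: inspanN. Qed.

Lemma inspanMn (V : zmodType) (S : seq V) u n : inspan S u -> inspan S (u *+ n).
Proof. by move=> /(inspanZ n%:R); rewrite mulrz_nat. Qed.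

Lemma inspan_nth (V : zmodType) (S : seq V) (i : 'I_(size S)) : inspan S S`_i.
Proof.
exists (fun j => (j == i)%:Z); rewrite (bigD1 i) //= eqxx mulr1z big1 ?addr0 //.
by move=> j /negbTE ->; rewrite mulr0z.
Qed.

Lemma inspan_mem (V : zmodType) (S : seq V) x : x \in S -> inspan S x.
Proof.
move=> xS; have := inspan_nth (Ordinal (idP (elimT idP (etrans (index_mem x S) xS)))).
by rewrite /= (nth_index 0 xS).
Qed.
Lemma inspan_ind (V : zmodType) (S : seq V) (P : V -> Prop) :
  P 0 -> (forall u v, P u -> P v -> P (u + v)) -> (forall u z, P u -> P (u *~ z)) ->
  (forall x, x \in S -> P x) -> forall v, inspan S v -> P v.
Proof.
move=> P0 PD PZ PS v [c ->]; apply: (big_ind P) => // i _.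
by apply: PZ; apply: PS; apply: mem_nth.
Qed.

Lemma inspan_sub (V : zmodType) (S S' : seq V) :
  (forall x, x \in S -> inspan S' x) -> forall v, inspan S v -> inspan S' v.
Proof.
move=> H; apply: inspan_ind => //; [exact: inspan0|exact: inspanD|move=> u z; exact: inspanZ].
Qed.

Lemma inspan_subset (V : zmodType) (S S' : seq V) :
  {subset S <= S'} -> forall v, inspan S v -> inspan S' v.
Proof. by move=> H; apply: inspan_sub => x /H; apply: inspan_mem. Qed.

Lemma inspan_cat (V : zmodType) (N S : seq V) v :
  inspan (N ++ S) v <-> exists n s, inspan N n /\ inspan S s /\ v = n + s.
Proof.
split.
  move: v; apply: inspan_ind.
  - by exists 0, 0; rewrite addr0; split; [exact: inspan0|split; [exact: inspan0|]].
  - move=> u v [n1 [s1 [? [? ->]]]] [n2 [s2 [? [? ->]]]].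
    exists (n1 + n2), (s1 + s2); split; first exact: inspanD.
    by split; [exact: inspanD| rewrite addrACA].
  - move=> u z [n [s [? [? ->]]]]; exists (n *~ z), (s *~ z).
    by split; [exact: inspanZ|split; [exact: inspanZ|rewrite mulrzDl]].
  - move=> x; rewrite mem_cat => /orP[xN|xS].
      by exists x, 0; rewrite addr0; split; [exact: inspan_mem|split; [exact: inspan0|]].
    by exists 0, x; rewrite add0r; split; [exact: inspan0|split; [exact: inspan_mem|]].
move=> [n [s [hn [hs ->]]]]; apply: inspanD.
  by apply: (inspan_subset _ hn) => z zN; rewrite mem_cat zN.
by apply: (inspan_subset _ hs) => z zS; rewrite mem_cat zS orbT.
Qed.

Lemma inspan_nil (V : zmodType) v : inspan ([::] : seq V) v -> v = 0.
Proof. by move=> [c ->]; rewrite big_ord0. Qed.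

Lemma inspan_seq1 (V : zmodType) (w v : V) : inspan [:: w] v -> exists a, v = w *~ a.
Proof. by move=> [c ->]; exists (c ord0); rewrite big_ord1. Qed.

Lemma inspan_eqmem (V : zmodType) (S S' : seq V) : S =i S' -> forall v, inspan S v <-> inspan S' v.
Proof. by move=> E v; split; apply: inspan_subset => z; rewrite E. Qed.
Definition fam_indep (V : zmodType) (N : seq V) (I : finType) (P : {set I}) (z : I -> V) :=
  forall c : I -> int, inspan N (\sum_(i in P) z i *~ c i) -> forall i, i \in P -> c i = 0.

Definition RS (V : zmodType) (U : seq V) (v : V) := exists k, (0 < k)%N /\ inspan U (v *+ k).

Lemma sum_delta (V : zmodType) (I : finType) (P : {set I}) (z : I -> V) i a :
  i \in P -> \sum_(j in P) z j *~ ((j == i)%:Z * a) = z i *~ a.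
Proof.
move=> iP; rewrite (bigD1 i) //= eqxx mul1r big1 ?addr0 // => j /andP[_ /negbTE ->].
by rewrite mul0r mulr0z.
Qed.

Lemma not_fam_indep (V : zmodType) (N : seq V) (I : finType) (P : {set I}) (z : I -> V) :
  ~ fam_indep N P z -> exists c : I -> int, inspan N (\sum_(i in P) z i *~ c i) /\
     exists2 i, i \in P & c i != 0.
Proof.
move=> H; apply: NNPP => H2; apply: H => c hc i iP; apply: NNPP => hci.
by apply: H2; exists c; split=> //; exists i => //; apply/eqP.
Qed.

Lemma key (V : zmodType) (ws : seq V) : forall (N : seq V) (I : finType) (P : {set I}) (z : I -> V),
  fam_indep N P z -> (forall i, i \in P -> RS (N ++ ws) (z i)) -> (#|P| <= size ws)%N.
Proof.
elim: ws => [|w ws IH] N I P z hind hRS.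
  rewrite leqn0 cards_eq0; apply/eqP/setP => i; rewrite in_set0; apply/negP => iP.
  have [k [k0 hk]] := hRS i iP; rewrite cats0 in hk.
  have H : inspan N (\sum_(j in P) z j *~ ((j == i)%:Z * k%:Z)).
    by rewrite sum_delta // -mulrz_nat.
  have := hind _ H i iP; rewrite eqxx mul1r => -[] k00.
  by rewrite k00 in k0.
have memE : (w :: N) ++ ws =i N ++ w :: ws.
  by move=> v; rewrite !(mem_cat, inE); case: (v == w); case: (v \in N).
have RSE : forall v, RS (N ++ w :: ws) v -> RS ((w :: N) ++ ws) v.
  by move=> v [k [k0 hk]]; exists k; split=> //; apply/(inspan_eqmem memE).
case: (classic (fam_indep (w :: N) P z)) => hw.
  apply: leq_trans (IH (w :: N) I P z hw _) _ => [i iP|]; first exact: RSE (hRS i iP).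
  by rewrite /= leqnSn.
have [c [hc [i0 i0P ci0]]] := not_fam_indep hw.
move/(inspan_cat [:: w] N): hc => [a1 [n [/inspan_seq1 [a ->] [hn hsum]]]].
have a0 : a != 0.
  apply/negP => /eqP a0; move: hsum; rewrite a0 mulr0z add0r => hsum.
  by move: ci0; rewrite (hind c _ i0 i0P) ?eqxx // hsum.
pose P' := P :\ i0.
have hind' : fam_indep (w :: N) P' z.
  move=> d /(inspan_cat [:: w] N) [b1 [n' [/inspan_seq1 [b ->] [hn' hsum']]]].
  pose e := fun i => (if i == i0 then 0 else d i * a) - c i * b.
  have He : \sum_(i in P) z i *~ e i = n' *~ a - n *~ b.
    rewrite /e; under eq_bigr => i _ do rewrite mulrzBr.
    rewrite sumrB (bigD1 i0) //= eqxx mulr0z add0r.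
    under eq_bigl => i do rewrite andbC -in_setD1.
    under eq_bigr => i /setD1P [/negbTE -> _] do rewrite mulrzA.
    under [X in _ - X]eq_bigr => i _ do rewrite mulrzA.
    rewrite -!mulrz_suml (_ : \sum_(i in P :\ i0) z i *~ d i = w *~ b + n') // hsum.
    rewrite !mulrzDl -!mulrzA (mulrC b a).
    by rewrite opprD addrACA subrr add0r.
  have hE : inspan N (\sum_(i in P) z i *~ e i).
    by rewrite He; apply: inspanB; apply: inspanZ.
  have b0 : b = 0.
    have := hind e hE i0 i0P; rewrite /e eqxx add0r => /eqP; rewrite oppr_eq0 mulf_eq0.
    by rewrite (negbTE ci0) /= => /eqP.
  move=> i /setD1P [ii0 iP]; have := hind e hE i iP.
  rewrite /e (negbTE ii0) b0 mulr0 subr0 => /eqP; rewrite mulf_eq0 (negbTE a0) orbF.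
  by move/eqP.
have := IH (w :: N) I P' z hind' (fun i iP' => RSE _ (hRS i (subsetP (subD1set P i0) i iP'))).
by rewrite (cardsD1 i0 P) i0P.
Qed.
Lemma indep_fam (V : zmodType) (N xs : seq V) :
  indep_mod N xs -> fam_indep N [set: 'I_(size xs)] (fun i => xs`_i).
Proof.
move=> h c hc i _; apply: (h c _ i).
by move: hc; under eq_bigl => j do rewrite in_setT.
Qed.

Lemma rank_bound (V : zmodType) (N ws xs : seq V) :
  indep_mod N xs -> (forall x, x \in xs -> RS (N ++ ws) x) -> (size xs <= size ws)%N.
Proof.
move=> hi hx; have := key (indep_fam hi) (fun i _ => hx _ (mem_nth 0 (ltn_ord i))).
by rewrite cardsT card_ord.
Qed.

Lemma indep_natP (V : zmodType) (N xs : seq V) :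
  indep_mod N xs <-> (forall c : nat -> int, inspan N (\sum_(i < size xs) xs`_i *~ c i) ->
                       forall i, (i < size xs)%N -> c i = 0).
Proof.
split=> [h c hc i ilt|h c hc i].
  exact: (h (fun j => c (val j)) hc (Ordinal ilt)).
pose c' k := if insub k is Some j then c j else 0.
have E : forall j : 'I_(size xs), c' j = c j by move=> j; rewrite /c' valK.
have := h c' _ i (ltn_ord i); rewrite E; apply.
by under eq_bigr => j _ do rewrite E.
Qed.

Lemma max_exists (Q : nat -> Prop) b : Q 0%N -> (forall r, Q r -> (r <= b)%N) ->
  exists r, Q r /\ forall r', Q r' -> (r' <= r)%N.
Proof.
move=> Q0 Qb.
suff H : forall d r, Q r -> (forall r', Q r' -> (r' <= r + d)%N) ->
  exists r, Q r /\ forall r', Q r' -> (r' <= r)%N.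
  by apply: (H b 0%N Q0) => r' /Qb.
elim=> [|d IH] r Qr Hr; first by exists r; split=> // r' /Hr; rewrite addn0.
case: (classic (exists r', Q r' /\ (r < r')%N)) => [[r' [Qr' lt]]|nex].
  apply: (IH r' Qr') => r'' /Hr; rewrite addnS => h; apply: leq_trans h _.
  by rewrite ltn_add2r.
exists r; split=> // r' Qr'; rewrite leqNgt; apply/negP => lt; apply: nex; by exists r'.
Qed.

Lemma indep_nil (V : zmodType) (N : seq V) : indep_mod N [::].
Proof. by move=> c _ []. Qed.

Lemma rank_modP (V : zmodType) (N S : seq V) : is_rank_mod N S (rank_mod N S).
Proof.
rewrite /rank_mod; apply: epsilon_spec.
pose Q r := exists xs : seq V, size xs = r /\ (forall x, x \in xs -> inspan (N ++ S) x)
                      /\ indep_mod N xs.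
have [r [Qr Hr]] : exists r, Q r /\ forall r', Q r' -> (r' <= r)%N.
  apply: (max_exists (b := size S)); first by exists [::]; split=> //; split=> //; exact: indep_nil.
  move=> r [xs [<- [hx hi]]]; apply: rank_bound hi _ => x /hx h.
  by exists 1%N; split => //; rewrite mulr1n.
exists r; split=> // xs hx hi; apply: Hr; by exists xs.
Qed.

Lemma rank_uniq (V : zmodType) (N S : seq V) a b : is_rank_mod N S a -> is_rank_mod N S b -> a = b.
Proof.
move=> [[xa [<- [ha1 ha2]]] Ha] [[xb [<- [hb1 hb2]]] Hb].
by apply/eqP; rewrite eqn_leq (Hb _ ha1 ha2) (Ha _ hb1 hb2).
Qed.

Lemma rank_modE (V : zmodType) (N S : seq V) r : is_rank_mod N S r -> rank_mod N S = r.
Proof. by move=> h; apply: rank_uniq (rank_modP N S) h. Qed.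
Lemma RS_of_Z (V : zmodType) (U : seq V) v a : a != 0 -> inspan U (v *~ a) -> RS U v.
Proof.
move=> a0 h; exists (absz (a * a)); split; first by rewrite absz_gt0 mulf_neq0.
rewrite pmulrn gez0_abs; last by rewrite -expr2 sqr_ge0.
by rewrite mulrzA; apply: inspanZ.
Qed.

Lemma RS_of_span (V : zmodType) (U : seq V) v : inspan U v -> RS U v.
Proof. by move=> h; exists 1%N; rewrite mulr1n. Qed.

Lemma RS0 (V : zmodType) (U : seq V) : RS U 0.
Proof. exact/RS_of_span/inspan0. Qed.

Lemma RSD (V : zmodType) (U : seq V) u v : RS U u -> RS U v -> RS U (u + v).
Proof.
move=> [k [k0 hk]] [l [l0 hl]]; exists (k * l)%N; split; first by rewrite muln_gt0 k0.
by rewrite mulrnDl; apply: inspanD; [rewrite mulrnA|rewrite mulnC mulrnA]; apply: inspanMn.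
Qed.

Lemma RSZ (V : zmodType) (U : seq V) u z : RS U u -> RS U (u *~ z).
Proof.
move=> [k [k0 hk]]; exists k; split => //.
by rewrite pmulrn -mulrzA mulrC mulrzA -pmulrn; apply: inspanZ.
Qed.
Lemma RS_span (V : zmodType) (W U : seq V) :
  (forall w, w \in W -> RS U w) -> forall v, inspan W v -> RS U v.
Proof.
move=> H; apply: inspan_ind => //; [exact: RS0|exact: RSD|move=> u z; exact: RSZ].
Qed.

Lemma RS_trans (V : zmodType) (W U : seq V) z :
  (forall w, w \in W -> RS U w) -> RS W z -> RS U z.
Proof.
move=> H [k [k0 /(RS_span H) [l [l0 hl]]]]; exists (k * l)%N; split; first by rewrite muln_gt0 k0.
by rewrite mulrnA.
Qed.

Lemma RS_sub (V : zmodType) (W U : seq V) z :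
  (forall v, inspan W v -> inspan U v) -> RS W z -> RS U z.
Proof. by move=> H [k [k0 hk]]; exists k; split => //; apply: H. Qed.

Lemma rank_max (V : zmodType) (N S xs : seq V) :
  size xs = rank_mod N S -> (forall x, x \in xs -> inspan (N ++ S) x) -> indep_mod N xs ->
  forall z, inspan (N ++ S) z -> RS (N ++ xs) z.
Proof.
move=> hs hx hi z hz.
have nind : ~ indep_mod N (z :: xs).
  move=> h; suff: (size (z :: xs) <= size xs)%N by rewrite /= ltnn.
  rewrite [X in (_ <= X)%N]hs; apply: (rank_modP N S).2 h => v.
  by rewrite inE => /orP[/eqP ->|]; [exact: hz|exact: hx].
have [c [hc [i ci]]] : exists c : 'I_(size (z :: xs)) -> int,
    inspan N (\sum_(i < size (z :: xs)) (z :: xs)`_i *~ c i) /\ exists i, c i != 0.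
  apply: NNPP => H; apply: nind => c hc i; apply: NNPP => ci; apply: H.
  by exists c; split => //; exists i; apply/eqP.
move: hc; rewrite big_ord_recl /=.
set s := \sum_(i < _) _ => hc.
have hs' : inspan xs s.
  exists (fun j => c (lift ord0 j)); rewrite /s; apply: eq_bigr => j _; by rewrite ?lift0.
case: (c ord0 =P 0) => [c00|c0].
  move: hc; rewrite c00 mulr0z add0r => hc.
  have : indep_mod N xs by [].
  move=> /(_ (fun j => c (lift ord0 j))) hi'.
  have hi2 : inspan N (\sum_(i < size xs) xs`_i *~ c (lift ord0 i)).
    by move: hc; rewrite /s; under eq_bigr => j _ do rewrite ?lift0.
  move: ci; case: (unliftP ord0 i) => [j ->|->]; first by rewrite (hi' hi2 j) eqxx.
  by rewrite c00 eqxx.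
apply: (RS_of_Z (a := c ord0)); first by apply/eqP.
apply/inspan_cat; exists (z *~ c ord0 + s), (- s); split=> //; split; last by rewrite addrK.
exact: inspanN.
Qed.
Lemma rank_mod_span (V : zmodType) (N S N' S' : seq V) :
  (forall v, inspan N v <-> inspan N' v) -> (forall v, inspan (N ++ S) v <-> inspan (N' ++ S') v) ->
  rank_mod N S = rank_mod N' S'.
Proof.
move=> EN ES; apply/esym/rank_modE.
have [[xs [hs [hx hi]]] Hm] := rank_modP N S.
have indE : forall xs, indep_mod N xs <-> indep_mod N' xs.
  by move=> ys; split=> h c hc; apply: h; apply/EN.
split.
  by exists xs; split=> //; split=> [x /hx /ES|]; last by apply/indE.
by move=> ys hy /indE; apply: Hm => x /hy /ES.
Qed.

Lemma rank_mod_le (V : zmodType) (N S S' : seq V) :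
  (forall v, inspan (N ++ S) v -> inspan (N ++ S') v) -> (rank_mod N S <= rank_mod N S')%N.
Proof.
move=> H; have [[xs [<- [hx hi]]] _] := rank_modP N S.
by apply: (rank_modP N S').2 hi => x /hx /H.
Qed.

Lemma rank_mod_size (V : zmodType) (N S : seq V) : (rank_mod N S <= size S)%N.
Proof.
have [[xs [<- [hx hi]]] _] := rank_modP N S.
by apply: rank_bound hi _ => x /hx /RS_of_span.
Qed.

Lemma inspan_sum (V : zmodType) (S : seq V) (I : finType) (F : I -> V) :
  (forall i, inspan S (F i)) -> inspan S (\sum_i F i).
Proof. move=> H; apply: big_ind => //; [exact: inspan0|exact: inspanD]. Qed.

Lemma sum_cat (V : zmodType) (ys xs : seq V) (c : nat -> int) :
  \sum_(i < size (ys ++ xs)) (ys ++ xs)`_i *~ c i =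
  \sum_(i < size ys) ys`_i *~ c i + \sum_(i < size xs) xs`_i *~ c (i + size ys)%N.
Proof.
rewrite -(big_mkord xpredT (fun i => (ys ++ xs)`_i *~ c i)).
rewrite -(big_mkord xpredT (fun i => ys`_i *~ c i)).
rewrite -(big_mkord xpredT (fun i => xs`_i *~ c (i + size ys)%N)) size_cat (@big_cat_nat _ _ _ (size ys)) ?leq_addr //=.
congr (_ + _).
  by rewrite !big_nat; apply: eq_bigr => i /andP[_ lt]; rewrite nth_cat lt.
rewrite -{1}(add0n (size ys)) big_addn addKn !big_nat.
by apply: eq_bigr => i _; rewrite nth_cat ltnNge leq_addl /= addnK.
Qed.

Lemma rank_add (V : zmodType) (N S : seq V) :
  (rank_mod N S + rank_mod [::] N)%N = rank_mod [::] (N ++ S).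
Proof.
have [[xs [hxs [hx hi]]] _] := rank_modP N S.
have [[ys [hys [hy hiy]]] _] := rank_modP [::] N.
apply/eqP; rewrite eqn_leq; apply/andP; split.
  rewrite -hxs -hys addnC -size_cat; apply: (rank_modP [::] (N ++ S)).2.
    move=> v; rewrite mem_cat => /orP[/hy|/hx] h //=.
    by apply: inspan_subset h => w; rewrite /= mem_cat => ->.
  apply/indep_natP => c; rewrite sum_cat => /inspan_nil hc.
  have hys0 : inspan N (\sum_(i < size ys) ys`_i *~ c i).
    by apply: inspan_sum => i; apply: inspanZ; apply: hy; apply: mem_nth.
  have cx : forall i, (i < size xs)%N -> c (i + size ys)%N = 0.
    move/indep_natP: hi; apply.
    have -> : \sum_(i < size xs) xs`_i *~ c (i + size ys)%N = - \sum_(i < size ys) ys`_i *~ c i.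
      by apply/eqP; rewrite -addr_eq0 addrC hc.
    exact: inspanN.
  have cy : forall i, (i < size ys)%N -> c i = 0.
    move/indep_natP: hiy; apply.
    have hx0 : \sum_(i < size xs) xs`_i *~ c (i + size ys)%N = 0.
      by apply: big1 => i _; rewrite cx ?mulr0z.
    by move: hc; rewrite hx0 addr0 => ->; apply: inspan0.
  move=> i; rewrite size_cat => lt; case: (ltnP i (size ys)) => le; first exact: cy.
  by rewrite -(subnK le); apply: cx; lia.
move: (rank_modP [::] (N ++ S)) => [[zs [<- [hz hiz]]] _].
rewrite -hxs -hys addnC -size_cat; apply: (rank_bound (ws := ys ++ xs) hiz) => z /hz hz'.
apply: (RS_trans (W := N ++ xs)); last exact: rank_max hxs hx hi _ hz'.
move=> w; rewrite mem_cat => /orP[wN|wx].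
  apply: RS_sub (rank_max hys hy hiy (inspan_mem wN)).
  by apply: inspan_subset => u /=; rewrite mem_cat => ->.
by apply/RS_of_span/inspan_mem; rewrite /= mem_cat wx orbT.
Qed.
Lemma inspan_ext (V : zmodType) (K K' : seq V) :
  (forall v, inspan K v <-> inspan K' v) -> inspan K = inspan K'.
Proof. by move=> H; apply: functional_extensionality => v; apply: propositional_extensionality. Qed.

Lemma hom_count_span (V G : zmodType) (K K' : seq V) :
  (forall v, inspan K v <-> inspan K' v) -> is_hom_count G K = is_hom_count G K'.
Proof.
move=> /inspan_ext E; rewrite /is_hom_count /is_tor_hom /in_sat E //.
Qed.

Lemma mult_mod_span (V G : zmodType) (N S N' S' : seq V) :
  (forall v, inspan (N ++ S) v <-> inspan (N' ++ S') v) -> mult_mod G N S = mult_mod G N' S'.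
Proof. by move=> /(hom_count_span G) E; rewrite /mult_mod E. Qed.
Lemma hom_count_leq (V G : zmodType) (K : seq V) n m :
  is_hom_count G K n -> is_hom_count G K m -> (n <= m)%N.
Proof.
move=> [hs [hsz [hP [hD hS]]]] [gs [gsz [gP [gD gS]]]].
have H : forall i : 'I_n, exists j : 'I_m, forall x, in_sat K x ->
    nth (fun _ => 0) hs i x = nth (fun _ => 0) gs j x.
  move=> i; have [j jm Hj] := gS _ (hP i (ltn_ord i)).
  by exists (Ordinal jm).
pose f i := proj1_sig (constructive_indefinite_description _ (H i)).
have fP : forall (i : 'I_n) x, in_sat K x -> nth (fun _ => 0) hs i x = nth (fun _ => 0) gs (f i) x.
  by move=> i; exact: (proj2_sig (constructive_indefinite_description _ (H i))).
have finj : injective f.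
  move=> i i' E; apply: val_inj; apply: hD; [exact: ltn_ord|exact: ltn_ord|move=> x hx].
  by rewrite fP // E -fP.
by have := leq_card f finj; rewrite !card_ord.
Qed.

Lemma hom_count_uniq (V G : zmodType) (K : seq V) n m :
  is_hom_count G K n -> is_hom_count G K m -> n = m.
Proof. by move=> h1 h2; apply/eqP; rewrite eqn_leq !(hom_count_leq h1 h2, hom_count_leq h2 h1). Qed.

Lemma mult_modE (V G : zmodType) (N S : seq V) n :
  is_hom_count G (N ++ S) n -> mult_mod G N S = n.
Proof.
move=> h; apply: (hom_count_uniq _ h); rewrite /mult_mod; apply: epsilon_spec; by exists n.
Qed.
Lemma hom_count_prod (V G1 G2 : zmodType) (K : seq V) n1 n2 :
  is_hom_count G1 K n1 -> is_hom_count G2 K n2 -> is_hom_count (G1 * G2)%type K (n1 * n2).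
Proof.
move=> [hs [hsz [hP [hD hS]]]] [gs [gsz [gP [gD gS]]]].
pose F i := fun v => (nth (fun _ => 0) hs (i %/ n2)%N v, nth (fun _ => 0) gs (i %% n2)%N v) : G1 * G2.
have bnd : forall i, (i < n1 * n2)%N -> (i %/ n2 < n1)%N /\ (i %% n2 < n2)%N.
  move=> i lt; have n2p : (0 < n2)%N by rewrite lt0n; apply/eqP => e; move: lt; rewrite e muln0.
  by split; [rewrite ltn_divLR|rewrite ltn_pmod].
exists (mkseq F (n1 * n2)); split; first by rewrite size_mkseq.
split.
  move=> i lt; rewrite nth_mkseq //; have [b1 b2] := bnd i lt.
  have [a1 z1] := hP _ b1; have [a2 z2] := gP _ b2.
  split=> [x y hx hy|x hx]; rewrite /F.
    by rewrite (a1 x y hx hy) (a2 x y hx hy).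
  by rewrite (z1 x hx) (z2 x hx).
split.
  move=> i j lti ltj E; move: E; rewrite !nth_mkseq // => E.
  have [bi1 bi2] := bnd i lti; have [bj1 bj2] := bnd j ltj.
  have e1 := hD _ _ bi1 bj1 (fun x hx => f_equal fst (E x hx)).
  have e2 := gD _ _ bi2 bj2 (fun x hx => f_equal snd (E x hx)).
  by rewrite (divn_eq i n2) (divn_eq j n2) e1 e2.
move=> phi [pa pz].
have [i1 lt1 H1] := hS (fun v => (phi v).1) (conj (fun x y hx hy => f_equal fst (pa x y hx hy)) (fun x hx => f_equal fst (pz x hx))).
have [i2 lt2 H2] := gS (fun v => (phi v).2) (conj (fun x y hx hy => f_equal snd (pa x y hx hy)) (fun x hx => f_equal snd (pz x hx))).
have n2p : (0 < n2)%N by apply: leq_ltn_trans lt2.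
have lt : (i1 * n2 + i2 < n1 * n2)%N.
  apply: (leq_trans (n := (i1 * n2 + n2)%N)); first by rewrite ltn_add2l.
  by rewrite -mulSnr leq_mul2r lt1 orbT.
exists (i1 * n2 + i2)%N => // x hx; rewrite nth_mkseq // /F.
rewrite divnMDl // divn_small // addn0 modnMDl modn_small // -H1 // -H2 //.
by case: (phi x).
Qed.
Lemma count_exists (X : Type) (d : X) (P : X -> Prop) (E : X -> X -> Prop) (F : finType)
  (code : X -> F) :
  (forall a b, P a -> P b -> (E a b <-> code a = code b)) ->
  exists n (hs : seq X), size hs = n /\ (forall i, (i < n)%N -> P (nth d hs i)) /\
    (forall i j, (i < n)%N -> (j < n)%N -> E (nth d hs i) (nth d hs j) -> i = j) /\
    (forall phi, P phi -> exists2 i, (i < n)%N & E phi (nth d hs i)).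
Proof.
move=> HE.
pose Q f := exists a, P a /\ code a = f.
pose pb f := if excluded_middle_informative (Q f) then true else false.
have pbP : forall f, pb f -> Q f by move=> f; rewrite /pb; by destruct (excluded_middle_informative (Q f)).
have pbI : forall f, Q f -> pb f by move=> f; rewrite /pb; by destruct (excluded_middle_informative (Q f)).
pose C := [set f | pb f].
pose pick f := epsilon (inhabits d) (fun a => P a /\ code a = f).
have pickP : forall f, f \in C -> P (pick f) /\ code (pick f) = f.
  move=> f; rewrite inE => /pbP hq; exact: (epsilon_spec (inhabits d) (fun a => P a /\ code a = f) hq).
set s := enum C.
have sC : forall i, (i < size s)%N -> nth (code d) s i \in C.
  by move=> i lt; rewrite -mem_enum; apply: mem_nth.
exists (size s), (map pick s); split; first by rewrite size_map.
split; first by move=> i lt; rewrite (nth_map (code d)) //; exact: (pickP _ (sC i lt)).1.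
split.
  move=> i j lti ltj; rewrite !(nth_map (code d)) //.
  have [Pi ci] := pickP _ (sC i lti); have [Pj cj] := pickP _ (sC j ltj).
  move/(HE _ _ Pi Pj); rewrite ci cj => e.
  by apply/eqP; rewrite -(nth_uniq (code d) lti ltj (enum_uniq _)) e.
move=> phi Pphi.
have cC : code phi \in C by rewrite inE; apply: pbI; exists phi.
have cs : code phi \in s by rewrite mem_enum.
exists (index (code phi) s); first by rewrite index_mem.
rewrite (nth_map (code d)) ?index_mem // nth_index //.
have [Pp cp] := pickP _ cC; by apply/(HE _ _ Pphi Pp); rewrite cp.
Qed.
Lemma uniform_mult (V : zmodType) (U W : seq V) :
  (forall w, w \in W -> RS U w) -> exists M, (0 < M)%N /\ forall v, inspan W v -> inspan U (v *+ M).
Proof.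
move=> H.
have [M [M0 HM]] : exists M, (0 < M)%N /\ forall w, w \in W -> inspan U (w *+ M).
  elim: W H => [|w W IH] H; first by exists 1%N.
  have [M [M0 HM]] := IH (fun v vW => H v (mem_behead (s := w :: W) vW)).
  have [k [k0 hk]] := H w (mem_head _ _).
  exists (k * M)%N; split; first by rewrite muln_gt0 k0.
  move=> v; rewrite inE => /orP[/eqP ->|vW]; first by rewrite mulrnA; apply: inspanMn.
  by rewrite mulnC mulrnA; apply: inspanMn; apply: HM.
exists M; split=> //; apply: inspan_ind => //.
- by rewrite mul0rn; apply: inspan0.
- by move=> u v hu hv; rewrite mulrnDl; apply: inspanD.
- by move=> u z hu; rewrite pmulrn -mulrzA mulrC mulrzA -pmulrn; apply: inspanZ.
Qed.

Lemma in_sat_span (V : zmodType) (K : seq V) x : inspan K x -> in_sat K x.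
Proof. by move=> h; exists 1%N; rewrite mulr1n. Qed.

Lemma in_sat0 (V : zmodType) (K : seq V) : in_sat K 0.
Proof. exact/in_sat_span/inspan0. Qed.

Lemma in_satD (V : zmodType) (K : seq V) x y : in_sat K x -> in_sat K y -> in_sat K (x + y).
Proof. exact: RSD. Qed.

Lemma in_satZ (V : zmodType) (K : seq V) x z : in_sat K x -> in_sat K (x *~ z).
Proof. exact: RSZ. Qed.

Lemma in_satB (V : zmodType) (K : seq V) x y : in_sat K x -> in_sat K y -> in_sat K (x - y).
Proof. by move=> hx hy; apply: in_satD => //; rewrite -mulrN1z; apply: in_satZ. Qed.

Lemma in_satMn (V : zmodType) (K : seq V) x n : in_sat K x -> in_sat K (x *+ n).
Proof. by move=> /(in_satZ n%:R); rewrite mulrz_nat. Qed.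

Lemma in_sat_div (V : zmodType) (K : seq V) y M : (0 < M)%N -> in_sat K (y *+ M) -> in_sat K y.
Proof.
move=> M0 [k [k0 hk]].
by exists (M * k)%N; split; rewrite ?muln_gt0 ?k0 ?M0 // mulrnA.
Qed.

Lemma tor_hom0 (V G : zmodType) (K : seq V) (phi : V -> G) : is_tor_hom K phi -> phi 0 = 0.
Proof. by move=> [_ h]; apply: h; apply: inspan0. Qed.

Lemma tor_homMn (V G : zmodType) (K : seq V) (phi : V -> G) x n :
  is_tor_hom K phi -> in_sat K x -> phi (x *+ n) = phi x *+ n.
Proof.
move=> hphi hx; elim: n => [|n IH]; first by rewrite !mulr0n (tor_hom0 hphi).
by rewrite !mulrS hphi.1 ?IH //; apply: in_satMn.
Qed.

Lemma tor_hom_eq (V G : zmodType) (K : seq V) (phi : V -> G) x x' :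
  is_tor_hom K phi -> in_sat K x' -> inspan K (x - x') -> phi x = phi x'.
Proof.
move=> hphi hx' hd; have -> : x = x' + (x - x') by rewrite addrC subrK.
rewrite hphi.1 //; last by apply: in_sat_span.
by rewrite [phi (x - x')]hphi.2 // addr0.
Qed.
Lemma sat_exponent (V : zmodType) (K : seq V) : fin_gen V ->
  exists M, (0 < M)%N /\ forall x, in_sat K x -> inspan K (x *+ M).
Proof.
move=> [gens hg].
have [[xs [hxs [hx hi]]] _] := rank_modP K gens.
have RSall : forall w, w \in gens -> RS (K ++ xs) w.
  move=> w _; apply: rank_max hxs hx hi _ _.
  by apply: inspan_subset (hg w) => u; rewrite mem_cat => ->; rewrite orbT.
have [M [M0 HM]] := uniform_mult RSall.
exists M; split=> // x [k [k0 hk]].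
have /inspan_cat [n [s [hn [[c ->] hxe]]]] := HM x (hg x).
have hsk : inspan K ((\sum_(i < size xs) xs`_i *~ c i) *+ k).
  have -> : (\sum_(i < size xs) xs`_i *~ c i) = x *+ M - n by rewrite hxe addrC addKr.
  by rewrite mulrnBl -mulrnA mulnC mulrnA; apply: inspanB; apply: inspanMn.
have c0 : forall i, c i = 0.
  move=> i; have : c i * k%:Z = 0.
    apply: (hi (fun i => c i * k%:Z)); move: hsk; rewrite pmulrn mulrz_suml.
    by under eq_bigr => j _ do rewrite -mulrzA.
  move/eqP; rewrite mulf_eq0 => /orP[/eqP //|]; rewrite -[k%:Z == 0]/(k == 0%N) => /eqP k00.
  by rewrite k00 in k0.
by rewrite hxe big1 ?addr0 // => i _; rewrite c0 mulr0z.
Qed.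
Lemma absz_mod_lt (c : int) M : (absz (c %% M.+1)%Z < M.+1)%N.
Proof.
have h0 : (0 <= (c %% M.+1)%Z) by apply: modz_ge0.
have h1 : ((c %% M.+1)%Z < M.+1%:Z) by apply: ltz_pmod.
by rewrite -ltz_nat gez0_abs.
Qed.

Lemma absz_mod_eq (a b : int) M : absz (a %% M.+1)%Z = absz (b %% M.+1)%Z ->
  (a %% M.+1 = b %% M.+1)%Z.
Proof.
move=> e; rewrite -(gez0_abs (modz_ge0 a (isT : M.+1%:Z != 0))).
by rewrite -(gez0_abs (modz_ge0 b (isT : M.+1%:Z != 0))) e.
Qed.

Lemma hom_count_exists (V G : zmodType) (K : seq V) : fin_gen V -> torsionwise_finite G ->
  exists n, is_hom_count G K n.
Proof.
move=> hfg htf.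
have [M [M0 HM]] := sat_exponent K hfg.
have [gens hg] := hfg.
have [s hs] := htf M M0.
case: M M0 HM hs => [//|M'] M0 HM hs.
pose T := {ffun 'I_(size gens) -> 'I_M'.+1}.
pose res (c : 'I_(size gens) -> int) : T := [ffun i => inord (absz (c i %% M'.+1)%Z)].
pose Q r x := in_sat K x /\ exists c, x = \sum_(i < size gens) gens`_i *~ c i /\ res c = r.
have Qdiff : forall r x x', Q r x -> Q r x' -> inspan K (x - x').
  move=> r x x' [hx [c [ex hc]]] [hx' [c' [ex' hc']]].
  have dv : forall i, (M'.+1%:Z %| c i - c' i)%Z.
    move=> i; rewrite -eqz_mod_dvd; have := congr1 (fun f : T => f i) (etrans hc (esym hc')).
    rewrite /= !ffunE => /(congr1 val); rewrite /= !inordK ?absz_mod_lt // => e.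
    by apply/eqP/absz_mod_eq.
  pose y := \sum_(i < size gens) gens`_i *~ ((c i - c' i) %/ M'.+1)%Z.
  have exy : x - x' = y *+ M'.+1.
    rewrite ex ex' -sumrB /y pmulrn mulrz_suml; apply: eq_bigr => i _.
    by rewrite -mulrzA divzK // mulrzBr.
  rewrite exy; apply: HM; apply: (in_sat_div M0); rewrite -exy; exact: in_satB.
pose rep r := epsilon (inhabits (0 : V)) (fun x => in_sat K x /\ ((exists x', Q r x') -> Q r x)).
have repP : forall r, in_sat K (rep r) /\ ((exists x', Q r x') -> Q r (rep r)).
  move=> r; apply: (epsilon_spec (inhabits (0 : V)) (fun x => in_sat K x /\ ((exists x', Q r x') -> Q r x))).
  case: (classic (exists x', Q r x')) => [[x' Qx']|nQ].
    by exists x'; split; [exact: Qx'.1|].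
  by exists 0; split; [exact: in_sat0|].
pose code (phi : V -> G) : {ffun T -> 'I_(size s).+1} := [ffun r => inord (index (phi (rep r)) s)].
suff HE : forall a b, is_tor_hom K a -> is_tor_hom K b ->
    ((forall x, in_sat K x -> a x = b x) <-> code a = code b).
  have [n [hs' H]] := count_exists (fun _ : V => 0 : G) HE.
  by exists n, hs'.
move=> a b Pa Pb; split.
  by move=> Eab; apply/ffunP => r; rewrite !ffunE (Eab _ (repP r).1).
move=> ec x hx; have [c hxc] := hg x.
have Qx : Q (res c) x by split=> //; exists c.
have Qr := (repP (res c)).2 (ex_intro _ x Qx).
have dK := Qdiff _ _ _ Qx Qr.
rewrite (tor_hom_eq Pa (repP _).1 dK) (tor_hom_eq Pb (repP _).1 dK).
have inS : forall phi, is_tor_hom K phi -> phi (rep (res c)) \in s.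
  move=> phi Pphi; apply: hs; rewrite -(tor_homMn _ Pphi (repP _).1).
  by apply: Pphi.2; apply: HM; exact: (repP _).1.
have := congr1 (fun f : {ffun T -> 'I_(size s).+1} => f (res c)) ec.
rewrite /= !ffunE => /(congr1 val); rewrite /= !inordK ?ltnS ?index_size // => ei.
by rewrite -(nth_index 0 (inS a Pa)) -(nth_index 0 (inS b Pb)) ei.
Qed.
Lemma mult_mod_prod (V G1 G2 : zmodType) (N S : seq V) : fin_gen V ->
  torsionwise_finite G1 -> torsionwise_finite G2 ->
  mult_mod (G1 * G2)%type N S = (mult_mod G1 N S * mult_mod G2 N S)%N.
Proof.
move=> hfg h1 h2.
have [n1 hn1] := @hom_count_exists _ G1 (N ++ S) hfg h1.
have [n2 hn2] := @hom_count_exists _ G2 (N ++ S) hfg h2.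
by rewrite (mult_modE hn1) (mult_modE hn2); apply: mult_modE; apply: hom_count_prod.
Qed.

Lemma mem_subl (V : zmodType) (A : seq V) (I : {set 'I_(size A)}) x :
  x \in subl A 0 I <-> exists2 i, i \in I & x = A`_i.
Proof.
rewrite /subl; split=> [/mapP [i] | [i iI ->]]; first by rewrite mem_enum; exists i.
by apply: map_f; rewrite mem_enum.
Qed.

Lemma sum_subl (R : nmodType) (V : zmodType) (A : seq V) (B : {set 'I_(size A)})
  (F : seq V -> nat -> R) :
  (forall s s' k, s =i s' -> F s k = F s' k) ->
  \sum_(C' : {set 'I_(size (subl A 0 B))}) F (subl (subl A 0 B) 0 C') #|C'| =
  \sum_(C : {set 'I_(size A)} | C \subset B) F (subl A 0 C) #|C|.
Proof.
move=> HF.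
have E : size (subl A 0 B) = #|B| by rewrite size_map -cardE.
pose emb (j : 'I_(size (subl A 0 B))) : 'I_(size A) := enum_val (cast_ord E j).
have emb_inj : injective emb.
  by move=> j j' /enum_val_inj /cast_ord_inj.
have embB : forall j, emb j \in B by move=> j; apply: enum_valP.
have nthE : forall j : 'I_(size (subl A 0 B)), (subl A 0 B)`_j = A`_(emb j).
  move=> j; rewrite /subl (nth_map (emb j)); last by rewrite -cardE -E.
  by rewrite /emb [in RHS](enum_val_nth (enum_val (cast_ord E j))).
symmetry.
rewrite (eq_bigl (fun C => C \in (fun C' : {set 'I_(size (subl A 0 B))} => emb @: C') @: [set: {set 'I_(size (subl A 0 B))}])).
  rewrite big_imset /=; last by move=> C1 C2 _ _; apply: imset_inj.
  apply: eq_big => [C'|C' _]; first by rewrite in_setT.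
  rewrite card_imset //; apply: HF => x; apply/idP/idP.
    by move/mem_subl => [i /imsetP [j jC ->] ->]; apply/mem_subl; exists j => //; rewrite ?nthE.
  by move/mem_subl => [j jC ->]; apply/mem_subl; exists (emb j); [apply: imset_f|rewrite nthE].
move=> C; apply/idP/idP => [sCB|/imsetP [C' _ ->]].
  apply/imsetP; exists (emb @^-1: C); first by rewrite in_setT.
  apply/setP => i; apply/idP/idP => [iC|/imsetP [j]]; last by rewrite inE => h ->.
  have iB := subsetP sCB i iC.
  apply/imsetP; exists (cast_ord (esym E) (enum_rank_in iB i)); last first.
    by rewrite /emb cast_ordKV enum_rankK_in.
  by rewrite inE /emb cast_ordKV enum_rankK_in.
by apply/subsetP => i /imsetP [j _ ->].
Qed.
Lemma prod_zero (R : comNzRingType) (T : finType) (F : T -> R) i : F i = 0 -> \prod_j F j = 0.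
Proof. by move=> h; rewrite (bigD1 i) //= h mul0r. Qed.

Lemma alt_sum (R : comNzRingType) (T : finType) (C S : {set T}) :
  \sum_(B : {set T} | (C \subset B) && (B \subset S)) (-1 : R) ^+ #|S :\: B| = (C == S)%:R.
Proof.
case: (boolP (C \subset S)) => CS; last first.
  rewrite big_pred0; last first.
    move=> B; apply/negP => /andP [h1 h2]; move/negP: CS; apply; exact: subset_trans h1 h2.
  by case: eqP => // e; move: CS; rewrite e subxx.
pose F := fun i => if i \in C then 1 else if i \in S then 1 else 0 : R.
pose G := fun i => if i \in C then 0 else if i \in S then -1 else 1 : R.
have H : \prod_i (F i + G i) = \sum_(J in {set T}) \prod_i (if i \in J then F i else G i).
  exact: bigA_distr.
have HL : \sum_(J in {set T}) \prod_i (if i \in J then F i else G i) =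
   \sum_(B : {set T} | (C \subset B) && (B \subset S)) (-1 : R) ^+ #|S :\: B|.
  rewrite [RHS]big_mkcond; apply: eq_big => // J _.
  case: (boolP ((C \subset J) && (J \subset S))) => [/andP [CJ JS]|nP].
    rewrite -prodr_const [RHS]big_mkcond /=; apply: eq_bigr => i _.
    rewrite /F /G !inE; case: (boolP (i \in J)) => iJ /=.
      by case: (i \in C) => //; rewrite (subsetP JS i iJ).
    case: (boolP (i \in C)) => iC; first by rewrite (subsetP CJ i iC) in iJ.
    by case: (i \in S).
  move: nP; rewrite negb_and => /orP [/subsetPn [i iC iJ]|/subsetPn [i iJ iS]].
    by apply: (prod_zero (i := i)); rewrite (negbTE iJ) /G iC.
  apply: (prod_zero (i := i)); rewrite iJ /F (negbTE iS).
  by case: (boolP (i \in C)) => // iC; rewrite (subsetP CS i iC) in iS.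
rewrite -HL -H.
case: (boolP (C == S)) => [/eqP e|ne].
  rewrite big1 // => i _; rewrite /F /G -e.
  by case: (i \in C); rewrite ?addr0 ?add0r.
have [i iS iC] : exists2 i, i \in S & i \notin C.
  by apply/subsetPn; move: ne; rewrite eqEsubset CS.
by apply: (prod_zero (i := i)); rewrite /F /G (negbTE iC) iS addrN.
Qed.
Lemma signB (R : comNzRingType) a b : (b <= a)%N -> (-1 : R) ^+ (a - b) = (-1) ^+ a * (-1) ^+ b.
Proof.
move=> h; rewrite -{2}(subnK h) exprD -mulrA -exprD addnn -mul2n mulnC exprM sqrr_sign mulr1.
by [].
Qed.

Definition tterm (R : comNzRingType) (V G : zmodType) (N L : seq V) (x y : R) (s : seq V) (k : nat) : R :=
  (mult_mod G N s)%:R * (x - 1) ^+ (rank_mod N L - rank_mod N s) * (y - 1) ^+ (k - rank_mod N s).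

Lemma tterm_inv (R : comNzRingType) (V G : zmodType) (N L : seq V) (x y : R) s s' k :
  s =i s' -> tterm G N L x y s k = tterm G N L x y s' k.
Proof.
move=> E; have E' : forall v, inspan (N ++ s) v <-> inspan (N ++ s') v.
  by apply: inspan_eqmem => v; rewrite !mem_cat E.
by rewrite /tterm (mult_mod_span G E') (@rank_mod_span _ N s N s') //.
Qed.

Lemma tutte_sub (R : comNzRingType) (V G : zmodType) (N A : seq V) (B : {set 'I_(size A)}) (x y : R) :
  arith_tutte R G N (subl A 0 B) x y =
  \sum_(C : {set 'I_(size A)} | C \subset B) tterm G N (subl A 0 B) x y (subl A 0 C) #|C|.
Proof.
rewrite -(@sum_subl _ _ A B (fun s k => tterm G N (subl A 0 B) x y s k)); last first.
  by move=> s s' k; apply: tterm_inv.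
by [].
Qed.

Lemma reindex_union (R : nmodType) (T : finType) (B : {set T}) (h : {set T} -> {set T} -> R) :
  \sum_(D : {set T} | D \subset ~: B) h (B :|: D) D = \sum_(S : {set T} | B \subset S) h S (S :\: B).
Proof.
rewrite (reindex_onto (fun S : {set T} => S :\: B) (fun D : {set T} => B :|: D)); last first.
  move=> D DB; apply/setP => i; rewrite !inE; case: (boolP (i \in B)) => //= iB.
  by apply/esym/negbTE/negP => iD; move: (subsetP DB i iD); rewrite inE iB.
have UE : forall S, B :|: (S :\: B) = B :|: S.
  by move=> S; apply/setP => i; rewrite !inE; case: (i \in B).
apply: eq_big => [S|S /andP [_ /eqP ->] //].
rewrite UE; apply/idP/idP => [/andP [_ /eqP e]|BS].
  by rewrite -e subsetUl.
rewrite (setUidPr BS) eqxx andbT; apply/subsetP => i; rewrite !inE => /andP [].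
by [].
Qed.
Lemma triple_sum (R : comNzRingType) (T : finType) (f g : {set T} -> R) :
  \sum_(B : {set T}) \sum_(C : {set T} | C \subset B) \sum_(S : {set T} | B \subset S)
     f C * g S * (-1) ^+ #|S :\: B| = \sum_(S : {set T}) f S * g S.
Proof.
transitivity (\sum_(B : {set T}) \sum_(C : {set T}) \sum_(S : {set T})
   (if (C \subset B) && (B \subset S) then f C * g S * (-1) ^+ #|S :\: B| else 0)).
  apply: eq_bigr => B _; rewrite big_mkcond; apply: eq_bigr => C _.
  case: (C \subset B) => /=; last by rewrite big1.
  by rewrite big_mkcond; apply: eq_bigr => S _; case: (B \subset S).
rewrite exchange_big; apply: eq_bigr => C _; rewrite exchange_big.
transitivity (\sum_(S : {set T}) f C * g S * (C == S)%:R).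
  apply: eq_bigr => S _; rewrite -(alt_sum R C S) mulr_sumr [RHS]big_mkcond.
  by apply: eq_bigr => B _; case: ifP; rewrite ?mulr0.
rewrite (bigD1 C) //= eqxx mulr1 big1 ?addr0 // => S /negbTE.
by rewrite eq_sym => ->; rewrite mulr0.
Qed.

Lemma rearr1 (R : comNzRingType) (a b c d e : R) : a * b * c * d * (e * e) = (a * d * e) * (b * c * e).
Proof. ring. Qed.

Lemma rearr2 (R : comNzRingType) (a b d e : R) : e * e = 1 -> (a * e) * (b * e * d) = a * b * d.
Proof. by move=> h; transitivity (a * b * d * (e * e)); [ring|rewrite h mulr1]. Qed.

Lemma rearr3 (R : comNzRingType) (a c d e : R) : a * (e * d) * c = a * c * d * e.
Proof. ring. Qed.
Lemma mem_subl_cat (V : zmodType) (A : seq V) (B D : {set 'I_(size A)}) :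
  subl A 0 B ++ subl A 0 D =i subl A 0 (B :|: D).
Proof.
move=> v; rewrite mem_cat; apply/idP/idP.
  move=> /orP [/mem_subl [i iB ->]|/mem_subl [i iD ->]]; apply/mem_subl; exists i => //;
  by rewrite inE ?iB ?iD ?orbT.
move=> /mem_subl [i]; rewrite inE => /orP [iB|iD] ->; apply/orP; [left|right];
  by apply/mem_subl; exists i.
Qed.

Lemma mem_subl_all (V : zmodType) (A : seq V) (B : {set 'I_(size A)}) :
  subl A 0 B ++ subl A 0 (~: B) =i A.
Proof.
move=> v; rewrite mem_subl_cat setUCr; apply/idP/idP.
  by move=> /mem_subl [i _ ->]; apply: mem_nth.
move=> /(nthP 0) [i lt <-]; apply/mem_subl; exists (Ordinal lt) => //; by rewrite inE.
Qed.

Lemma size_subl (V : zmodType) (A : seq V) (B : {set 'I_(size A)}) : size (subl A 0 B) = #|B|.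
Proof. by rewrite size_map -cardE. Qed.

Lemma sgsq (R : comNzRingType) k : (-1 : R) ^+ k * (-1) ^+ k = 1.
Proof. by rewrite -expr2 sqrr_sign. Qed.



Unset Implicit Arguments.

Lemma rearr4 (R : comNzRingType) (a c d e f : R) : a * c * (d * (e * f)) = a * c * e * f * d.
Proof. ring. Qed.
Theorem mainTheorem19 (Gamma : zmodType) (hGamma : fin_gen Gamma) (A : seq Gamma)
  (G1 G2 : zmodType) (h1 : torsionwise_finite G1) (h2 : torsionwise_finite G2)
  (R : comNzRingType) (x y : R) :
  arith_tutte R (G1 * G2)%type [::] A x y =
  \sum_(B : {set 'I_(size A)})
     arith_tutte R G1 [::] (subl A 0 B) 0 y *
     arith_tutte R G2 (subl A 0 B) (subl A 0 (~: B)) x 0.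
Proof.
pose r (I : {set 'I_(size A)}) := rank_mod [::] (subl A 0 I).
pose rA := rank_mod [::] A.
pose sg k := (-1 : R) ^+ k.
pose f (I : {set 'I_(size A)}) := (mult_mod G1 [::] (subl A 0 I))%:R * (y - 1) ^+ (#|I| - r I) * sg (r I).
pose g (I : {set 'I_(size A)}) := (mult_mod G2 [::] (subl A 0 I))%:R * (x - 1) ^+ (rA - r I) * sg (r I).
have LHS : arith_tutte R (G1 * G2)%type [::] A x y = \sum_S f S * g S.
  rewrite /arith_tutte; apply: eq_bigr => S _.
  rewrite (@mult_mod_prod _ G1 G2 [::] _ hGamma h1 h2) natrM /f /g /sg.
  by rewrite -rearr1 sgsq mulr1.
rewrite LHS -(triple_sum f g); apply: eq_bigr => B _.
rewrite !tutte_sub big_distrl /=; apply: eq_bigr => C CB.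
rewrite -(reindex_union B (fun S D => f C * g S * (-1) ^+ #|D|)) big_distrr /=.
apply: eq_bigr => D DB.
have rCB : (r C <= r B)%N.
  apply: rank_mod_le; apply: inspan_subset => v /= /mem_subl [i iC ->].
  by apply/mem_subl; exists i => //; apply: (subsetP CB).
have t1 : tterm G1 [::] (subl A 0 B) 0 y (subl A 0 C) #|C| = f C * sg (r B).
  by rewrite /tterm /f /sg sub0r (signB _ rCB) rearr3.
have t2 : tterm G2 (subl A 0 B) (subl A 0 (~: B)) x 0 (subl A 0 D) #|D| =
    g (B :|: D) * sg (r B) * sg #|D|.
  have e1 : mult_mod G2 (subl A 0 B) (subl A 0 D) = mult_mod G2 [::] (subl A 0 (B :|: D)).
    by apply: mult_mod_span; apply: inspan_eqmem; apply: mem_subl_cat.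
  have e2 : addn (rank_mod (subl A 0 B) (subl A 0 D)) (r B) = r (B :|: D).
    rewrite /r rank_add; apply: rank_mod_span => // v.
    by apply: inspan_eqmem; apply: mem_subl_cat.
  have e3 : addn (rank_mod (subl A 0 B) (subl A 0 (~: B))) (r B) = rA.
    rewrite /r rank_add; apply: rank_mod_span => // v.
    by apply: inspan_eqmem; apply: mem_subl_all.
  have e4 : leq (rank_mod (subl A 0 B) (subl A 0 D)) #|D|.
    by rewrite -(size_subl D) rank_mod_size.
  rewrite /tterm e1 sub0r (signB _ e4).
  have -> : subn (rank_mod (subl A 0 B) (subl A 0 (~: B))) (rank_mod (subl A 0 B) (subl A 0 D)) =
     subn rA (r (B :|: D)) by lia.
  have -> : (-1 : R) ^+ rank_mod (subl A 0 B) (subl A 0 D) = sg (r (B :|: D)) * sg (r B).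
    by rewrite -e2 /sg exprD -mulrA sgsq mulr1.
  by rewrite /g /sg rearr4.
by rewrite t1 t2 rearr2 // sgsq.
Qed.
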